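(* Let $n\ge2$, $\beta_i>0$, $\nu_i\in[0,1]$ and $\rho_i\in[0,1]$ for $i\in\{1,\dots,n\}$, and consider the well-mixed resource–consumption system \[ \dot x=(1-x)x-x\sum_{i=1}^n y_i,\qquad \dot y_i=\beta_i\Big((1-\nu_i)(x-\rho_i)+\frac{\nu_i}{n-1}\sum_{j\ne i}(y_j-y_i)\Big),\quad i=1,\dots,n . \] Assume that at most one of $\nu_1,\dots,\nu_n$ equals $0$, and that it is not the case that all $\nu_i=1$, not the case that all $\nu_i=0$, not the case that all $\rho_i=1$, and not the case that all $\rho_i=0$. Then the point $(\bar x,\bar y_1,\dots,\bar y_n)$ given by \[ \bar x=\frac{\sum_{i}\Big(\rho_i(\nu_i-1)\prod_{j\ne i}\nu_j\Big)}{n\prod_{j}\nu_j-\sum_{j}\prod_{k\ne j}\nu_k}, \] \[ \bar y_i=\frac1n+\frac{\rho_i(\nu_i-1)\Big((1-n)\sum_{j\ne i}\prod_{k\ne i,j}\nu_k+n(n-2)\prod_{j\ne i}\nu_j\Big)-(1-n+n\nu_i)\sum_{j\ne i}\Big(\rho_j(\nu_j-1)\prod_{k\ne i,j}\nu_k\Big)}{n\Big(n\prod_{j}\nu_j-\sum_{j}\prod_{k\ne j}\nu_k\Big)}, \] for $i\in\{1,\dots,n\}$ (all indices ranging over $\{1,\dots,n\}$, empty products equal to $1$), is an equilibrium of the system.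
   Context: An equilibrium is a point $(\bar x,\bar y_1,\dots,\bar y_n)\in\mathbb{R}^{n+1}$ at which all right-hand sides vanish. *)

(* Defs.v *)
From mathcomp Require Import all_boot all_order all_algebra.
Set Implicit Arguments. Unset Strict Implicit. Unset Printing Implicit Defensive.
Import Order.TTheory GRing.Theory Num.Theory.
Local Open Scope ring_scope.

Section System.
Variables (R : realFieldType) (n : nat) (beta nu rho : 'I_n -> R).

Definition xdot (x : R) (y : 'I_n -> R) : R :=
  (1 - x) * x - x * \sum_(i < n) y i.

Definition ydot (i : 'I_n) (x : R) (y : 'I_n -> R) : R :=
  beta i * ((1 - nu i) * (x - rho i)
            + nu i / (n%:R - 1) * \sum_(j < n | j != i) (y j - y i)).

Definition is_equilibrium (x : R) (y : 'I_n -> R) : Prop :=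
  xdot x y = 0 /\ forall i : 'I_n, ydot i x y = 0.

Definition denom : R :=
  n%:R * \prod_(j < n) nu j - \sum_(j < n) \prod_(k < n | k != j) nu k.

Definition xbar : R :=
  (\sum_(i < n) (rho i * (nu i - 1) * \prod_(j < n | j != i) nu j)) / denom.

Definition ybar (i : 'I_n) : R :=
  1 / n%:R +
  (rho i * (nu i - 1) *
     ((1 - n%:R) * \sum_(j < n | j != i) \prod_(k < n | (k != i) && (k != j)) nu k
      + n%:R * (n%:R - 2) * \prod_(j < n | j != i) nu j)
   - (1 - n%:R + n%:R * nu i) *
       \sum_(j < n | j != i) (rho j * (nu j - 1) * \prod_(k < n | (k != i) && (k != j)) nu k))
  / (n%:R * denom).
End System.

(* Main.v *)
Require Import Defs.
From mathcomp Require Import all_boot all_order all_algebra.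
From mathcomp Require Import ring lra.
Import Order.TTheory GRing.Theory Num.Theory.
Local Open Scope ring_scope.

Lemma sumS (R : realFieldType) n (i : 'I_n) (f : 'I_n -> R) :
  \sum_(j < n | j != i) f j = \sum_(j < n) f j - f i.
Proof. by rewrite [X in _ = X - _](bigD1 i) //= addrC addrK. Qed.

Theorem lemma10p6 (R : realFieldType) (n : nat) (beta nu rho : 'I_n -> R) :
  (2 <= n)%N ->
  (forall i, 0 < beta i) ->
  (forall i, 0 <= nu i <= 1) ->
  (forall i, 0 <= rho i <= 1) ->
  (forall i j, nu i = 0 -> nu j = 0 -> i = j) ->
  ~ (forall i, nu i = 1) ->
  ~ (forall i, nu i = 0) ->
  ~ (forall i, rho i = 1) ->
  ~ (forall i, rho i = 0) ->
  is_equilibrium beta nu rho (xbar nu rho) (ybar nu rho).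
Proof.
move=> n2 _ hnu _ hz hn1 _ _ _.
set P := \prod_(j < n) nu j.
set Pi := fun i => \prod_(j < n | j != i) nu j.
set Pij := fun i j => \prod_(k < n | (k != i) && (k != j)) nu k.
set a := fun i => rho i * (nu i - 1).
set N : R := n%:R.
have hP i : P = nu i * Pi i by rewrite /P (bigD1 i).
have hPij i j : j != i -> Pi j = nu i * Pij i j.
  move=> ji; rewrite /Pi (bigD1 i) 1?eq_sym //=; congr (_ * _).
  by apply: eq_bigl => k; rewrite andbC.
have Psym i j : Pij i j = Pij j i by apply: eq_bigl => k; rewrite andbC.
set Q := \sum_(j < n) Pi j.
set T := \sum_(j < n) a j * Pi j.
have hD : denom nu = N * P - Q by [].
have hx : xbar nu rho = T / denom nu by [].
have Npos : 2%:R <= N by rewrite /N ler_nat.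
have hDneg : denom nu < 0.
  have [j [hj1 hj2]] : exists j, nu j < 1 /\ 0 < Pi j.
    case: (pickP (fun j => nu j == 0)) => [j0 /eqP h0 | hnz].
      exists j0; split; first by rewrite h0 ltr01.
      apply: prodr_gt0 => k kj; rewrite lt_neqAle (andP (hnu k)).1 andbT.
      by apply/eqP => /esym hk; move/eqP: kj; apply; apply: hz.
    have nupos k : 0 < nu k.
      by rewrite lt_neqAle (andP (hnu k)).1 andbT eq_sym hnz.
    case: (pickP (fun j => nu j != 1)) => [j hj | h1]; last first.
      by exfalso; apply: hn1 => i; move/negbT: (h1 i); rewrite negbK => /eqP.
    exists j; split; last by apply: prodr_gt0 => k _.
    by rewrite lt_neqAle hj (andP (hnu j)).2.
  have -> : denom nu = \sum_(k < n) (nu k - 1) * Pi k.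
    rewrite hD.
    have -> : N * P = \sum_(k < n) P by rewrite sumr_const card_ord /N mulr_natl.
    rewrite /Q (eq_bigr (fun k => nu k * Pi k)) => [|k _]; last exact: hP.
    by rewrite -sumrB; apply: eq_bigr => k _; ring.
  rewrite (bigD1 j) //=.
  have h1 : (nu j - 1) * Pi j < 0 by rewrite pmulr_llt0 // subr_lt0.
  have h2 : \sum_(k < n | k != j) (nu k - 1) * Pi k <= 0.
    apply: sumr_le0 => k _; apply: mulr_le0_ge0; first by rewrite subr_le0 (andP (hnu k)).2.
    by apply: prodr_ge0 => m _; exact: (andP (hnu m)).1.
  lra.
have D0 : denom nu != 0 by rewrite lt_eqF.
have N0 : N != 0 by apply/eqP => h; rewrite h in Npos; lra.
have N10 : N - 1 != 0 by apply/eqP => h; lra.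
set U := fun i => \sum_(j < n | j != i) Pij i j.
set V := fun i => \sum_(j < n | j != i) a j * Pij i j.
set Ni := fun i => a i * ((1 - N) * U i + N * (N - 2) * Pi i) - (1 - N + N * nu i) * V i.
have hy i : ybar nu rho i = 1 / N + Ni i / (N * denom nu) by [].
have hU i : nu i * U i = Q - Pi i.
  rewrite /U mulr_sumr (eq_bigr (fun j => Pi j)) => [|j ji]; last by rewrite (hPij i).
  by rewrite sumS.
have hV i : nu i * V i = T - a i * Pi i.
  rewrite /V mulr_sumr (eq_bigr (fun j => a j * Pi j)) => [|j ji]; last by rewrite (hPij i) // mulrCA.
  by rewrite sumS.
have hswap : \sum_(i < n) a i * U i = \sum_(i < n) V i.
  rewrite /U /V (eq_bigr (fun i => \sum_(j < n | j != i) a i * Pij i j)) => [|i _]; last by rewrite mulr_sumr.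
  rewrite (exchange_big_dep xpredT) //=; apply: eq_bigr => j _.
  apply: eq_big => [i|i _]; first by rewrite eq_sym.
  by rewrite Psym.
have hsumN : \sum_(i < n) Ni i = - (N * T).
  rewrite (eq_bigr (fun i => (1-N)*(a i*U i) + N*(N-2)*(a i*Pi i) - (1-N)*V i - N*(nu i*V i))) => [|i _]; last by rewrite /Ni; ring.
  rewrite !sumrB big_split /= -!mulr_sumr (eq_bigr _ (fun i _ => hV i)) sumrB sumr_const card_ord hswap -/T.
  rewrite -mulr_natr -/N; ring.
have hNi i : nu i * Ni i = (N - 1) * a i * denom nu + ((N - 1) - N * nu i) * T.
  have -> : nu i * Ni i = a i * ((1-N)*(nu i * U i) + N*(N-2)*(nu i * Pi i)) - (1-N+N*nu i)*(nu i * V i) by rewrite /Ni; ring.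
  by rewrite hU hV hD (hP i); ring.
have hS : \sum_(i < n) ybar nu rho i = 1 - xbar nu rho.
  rewrite (eq_bigr _ (fun i _ => hy i)) big_split /= sumr_const card_ord -mulr_suml hsumN hx -mulr_natr -/N.
  by field; rewrite N0 D0.
split.
  by rewrite /xdot hS; ring.
move=> i; rewrite /ydot.
have -> : \sum_(j < n | j != i) (ybar nu rho j - ybar nu rho i) = \sum_(j < n) ybar nu rho j - N * ybar nu rho i.
  by rewrite sumS sumrB sumr_const card_ord -mulr_natl -/N subrr subr0.
apply/eqP; rewrite mulf_eq0; apply/orP; right; apply/eqP.
rewrite hS hy hx.
have -> : nu i / (N - 1) * (1 - T / denom nu - N * (1 / N + Ni i / (N * denom nu)))
   = (- (nu i * T) - nu i * Ni i) / ((N - 1) * denom nu) by field; rewrite N0 D0 N10.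
by rewrite hNi /a; field; rewrite N10 D0.
Qed.
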